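(* Let $z\in\mathcal N_h^I$ and let $\varphi$ be a quadratic polynomial on $\mathbb R^d$. If $\varphi$ has no strict local maximum in $B_\varepsilon(z)$, then $$-\Delta^\diamond_{\infty,\mathfrak h}\varphi(z)\ge-\lambda_{\max}(D^2\varphi)-C\Big(\frac{h^2}{\varepsilon^2}+\theta^2\Big),$$ where $C$ depends on $d$, $D^2\varphi$, and the shape regularity constant of $\mathcal T_h$.
   Context: Setting: $\Omega\subset\mathbb R^d$ ($d\ge1$) is a bounded domain with continuous boundary. For $r>0$, $\Omega^{(r)}=\{x\in\Omega:\operatorname{dist}(x,\partial\Omega)>r\}$. $\mathcal T_h$ is a shape-regular mesh of closed simplices, $h=\max_T\operatorname{diam}T$, $\Omega_h$ the interior of the union of the simplices, with $\Omega^{(h)}\subset\Omega_h\subset\Omega$; $\mathcal N_h$ the set of vertices. $\mathcal I_h$ is the Lagrange interpolant onto continuous piecewise linear functions on $\mathcal T_h$. Parameters $\mathfrak h=(h,\varepsilon,\theta)$, $\varepsilon\in[h,\operatorname{diam}\Omega]$, $0<\theta\le1$. $\mathcal N_h^I=\mathcal N_h\cap\Omega^{(2\varepsilon)}$. $\mathbb S_\theta$: finite symmetric subset of the unit sphere $\mathbb S$ such that each $v\in\mathbb S$ has $v_\theta\in\mathbb S_\theta$ with $|v-v_\theta|\le\theta$. For $z\in\mathcal N_h^I$: $\mathcal N_{\mathfrak h}(z)=\{z\}\cup\{z+\varepsilon v_\theta:v_\theta\in\mathbb S_\theta\}$, and for $w\in C(\overline\Omega)$, $-\Delta^\diamond_{\infty,\mathfrak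 h}w(z)=\varepsilon^{-2}\big(2w(z)-\max_{x\in\mathcal N_{\mathfrak h}(z)}\mathcal I_hw(x)-\min_{x\in\mathcal N_{\mathfrak h}(z)}\mathcal I_hw(x)\big)$. $B_\varepsilon(z)$ is the open Euclidean ball; $\lambda_{\max}$ is the largest eigenvalue. *)

(* Defs.v *)
From HB Require Import structures.
From mathcomp Require Import all_boot all_order all_algebra.
From mathcomp Require Import all_classical all_reals all_analysis.

Set Implicit Arguments.
Unset Strict Implicit.
Unset Printing Implicit Defensive.

Import Order.TTheory GRing.Theory Num.Theory.
Import numFieldNormedType.Exports.
Local Open Scope classical_set_scope.
Local Open Scope ring_scope.

Section Defs.
Variables (R : realType) (d : nat).
Local Notation pt := 'rV[R]_d.

Definition dotp (x y : pt) : R := (x *m y^T) 0 0.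
Definition enorm (x : pt) : R := Num.sqrt (dotp x x).

Definition eball (c : pt) (r : R) : set pt := [set y | enorm (y - c) < r].

Definition edist_set (x : pt) (S : set pt) : R :=
  inf [set r | exists2 y, S y & r = enorm (x - y)].

Definition bdry (S : set pt) : set pt := closure S `\` interior S.

Definition inner_set (Om : set pt) (r : R) : set pt :=
  [set x | Om x /\ r < edist_set x (bdry Om)].

Definition diam_set (S : set pt) : R :=
  sup [set r | exists x y, [/\ S x, S y & r = enorm (x - y)]].

(* Bounded domain with continuous boundary: locally, in rotated coordinates
   (distinguished unit direction e), Omega is the subgraph of a continuous
   function of the remaining coordinates. *)
Definition continuous_boundary (Om : set pt) : Prop :=
  forall x, bdry Om x ->
  exists2 r, 0 < r &
  exists2 e : pt, enorm e = 1 &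
  exists g : pt -> R,
    [/\ continuous g,
        (forall y (t : R), g (y + t *: e) = g y) &
        Om `&` eball x r = [set y | eball x r y /\ dotp y e < g y]].

Definition bounded_domain_cont_bdry (Om : set pt) : Prop :=
  [/\ open Om, connected Om, (exists x, Om x),
      (exists M : R, forall x, Om x -> enorm x <= M) &
      continuous_boundary Om].

Definition chull (S : set pt) : set pt :=
  [set x | exists n (p : 'I_n -> pt) (l : 'I_n -> R),
     [/\ forall i, S (p i), forall i, 0 <= l i, \sum_i l i = 1 &
         x = \sum_i l i *: p i]].

Definition simplex (v : 'I_d.+1 -> pt) : set pt := chull (range v).

Definition affine_indep (v : 'I_d.+1 -> pt) : Prop :=
  forall l : 'I_d.+1 -> R, \sum_i l i = 0 -> \sum_i l i *: v i = 0 ->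
    forall i, l i = 0.

Definition inradius (S : set pt) : R :=
  sup [set r | 0 < r /\ exists c, eball c r `<=` S].

(* A mesh with m simplices: M j i is the i-th vertex of the j-th simplex.
   Nondegenerate simplices, conforming (two simplices meet in the convex
   hull of their common vertices, i.e. a common face or the empty set). *)
Definition is_mesh m (M : 'I_m -> 'I_d.+1 -> pt) : Prop :=
  (forall j, affine_indep (M j)) /\
  (forall j k, simplex (M j) `&` simplex (M k) =
               chull (range (M j) `&` range (M k))).

Definition shape_regular m (sigma : R) (M : 'I_m -> 'I_d.+1 -> pt) : Prop :=
  forall j, diam_set (simplex (M j)) <= sigma * inradius (simplex (M j)).

Definition meshsize m (M : 'I_m -> 'I_d.+1 -> pt) : R :=
  \big[Num.max/0]_(j < m) diam_set (simplex (M j)).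

Definition mesh_domain m (M : 'I_m -> 'I_d.+1 -> pt) : set pt :=
  interior (\bigcup_j simplex (M j)).

Definition nodes m (M : 'I_m -> 'I_d.+1 -> pt) : set pt :=
  [set x | exists j i, M j i = x].

(* Lagrange P1 interpolant: on a simplex T containing x, with barycentric
   coordinates l of x, I_h w (x) = sum_i l_i w(v_i) (well defined by
   conformity and nondegeneracy; value 0 outside the mesh). *)
Definition interp m (M : 'I_m -> 'I_d.+1 -> pt) (w : pt -> R) (x : pt) : R :=
  xget 0 [set y | exists j (l : 'I_d.+1 -> R),
     [/\ forall i, 0 <= l i, \sum_i l i = 1,
         x = \sum_i l i *: M j i & y = \sum_i l i * w (M j i)]].

Definition theta_net (theta : R) (S : seq pt) : Prop :=
  [/\ forall v, v \in S -> enorm v = 1,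
      forall v, v \in S -> - v \in S &
      forall v, enorm v = 1 -> exists2 vt, vt \in S & enorm (v - vt) <= theta].

Definition stencil (eps : R) (S : seq pt) (z : pt) : seq pt :=
  z :: [seq z + eps *: v | v <- S].

Definition neg_disc_inf_lap m (M : 'I_m -> 'I_d.+1 -> pt) (eps : R)
    (S : seq pt) (w : pt -> R) (z : pt) : R :=
  eps ^-2 * (2 * w z
    - \big[Num.max/interp M w z]_(x <- stencil eps S z) interp M w x
    - \big[Num.min/interp M w z]_(x <- stencil eps S z) interp M w x).

Definition quad (A : 'M[R]_d) (b : pt) (c : R) (x : pt) : R :=
  2^-1 * dotp (x *m A) x + dotp b x + c.

Definition lambda_max (A : 'M[R]_d) : R := sup [set a | eigenvalue A a].

Definition strict_loc_max (f : pt -> R) (x : pt) : Prop :=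
  exists2 delta, 0 < delta &
    forall y, 0 < enorm (y - x) < delta -> f y < f x.

End Defs.

(* Main.v *)
Require Import Defs.
From HB Require Import structures.
From mathcomp Require Import all_boot all_order all_algebra.
From mathcomp Require Import all_classical all_reals all_analysis.
From mathcomp Require Import ring lra.
Set Implicit Arguments.
Unset Strict Implicit.
Unset Printing Implicit Defensive.
Import Order.TTheory GRing.Theory Num.Theory.
Import numFieldNormedType.Exports.
Local Open Scope classical_set_scope.
Local Open Scope ring_scope.

Section Basics.
Variables (R : realType) (d : nat).
Local Notation pt := 'rV[R]_d.

Lemma dotpE (x y : pt) : dotp x y = \sum_k x 0 k * y 0 k.
Proof. by rewrite /dotp mxE; apply: eq_bigr => k _; rewrite mxE. Qed.

Lemma dotpC (x y : pt) : dotp x y = dotp y x.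
Proof. by rewrite !dotpE; apply: eq_bigr => k _; rewrite mulrC. Qed.

Lemma dotpDl (x y w : pt) : dotp (x + y) w = dotp x w + dotp y w.
Proof. by rewrite !dotpE -big_split; apply: eq_bigr => k _; rewrite mxE mulrDl. Qed.

Lemma dotpZl a (x w : pt) : dotp (a *: x) w = a * dotp x w.
Proof. by rewrite !dotpE mulr_sumr; apply: eq_bigr => k _; rewrite mxE mulrA. Qed.

Lemma dotpNl (x w : pt) : dotp (- x) w = - dotp x w.
Proof. by rewrite -scaleN1r dotpZl mulN1r. Qed.

Lemma dotpBl (x y w : pt) : dotp (x - y) w = dotp x w - dotp y w.
Proof. by rewrite dotpDl dotpNl. Qed.

Lemma dotpDr (x y w : pt) : dotp w (x + y) = dotp w x + dotp w y.
Proof. by rewrite dotpC dotpDl !(dotpC w). Qed.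
Lemma dotpZr a (x w : pt) : dotp w (a *: x) = a * dotp w x.
Proof. by rewrite dotpC dotpZl dotpC. Qed.
Lemma dotpNr (x w : pt) : dotp w (- x) = - dotp w x.
Proof. by rewrite dotpC dotpNl dotpC. Qed.
Lemma dotpBr (x y w : pt) : dotp w (x - y) = dotp w x - dotp w y.
Proof. by rewrite dotpDr dotpNr. Qed.
Lemma dotp0l (x : pt) : dotp 0 x = 0.
Proof. by rewrite -(scale0r 0) dotpZl mul0r. Qed.
Lemma dotp0r (x : pt) : dotp x 0 = 0.
Proof. by rewrite dotpC dotp0l. Qed.

Lemma dotp_suml I (r : seq I) (P : pred I) (F : I -> pt) w :
  dotp (\sum_(i <- r | P i) F i) w = \sum_(i <- r | P i) dotp (F i) w.
Proof.
elim/big_rec2: _ => [|i y1 y2 _ <-]; first by rewrite dotp0l.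
by rewrite dotpDl.
Qed.

Lemma dotp_ge0 (x : pt) : 0 <= dotp x x.
Proof. by rewrite dotpE sumr_ge0 // => k _; rewrite -expr2 sqr_ge0. Qed.

Lemma dotp_eq0 (x : pt) : (dotp x x == 0) = (x == 0).
Proof.
apply/idP/idP => [|/eqP->]; last by rewrite dotp0l.
rewrite dotpE psumr_eq0 => [/allP H|k _]; last by rewrite -expr2 sqr_ge0.
apply/eqP/rowP => k; rewrite [RHS]mxE.
have := H k (mem_index_enum k); rewrite implyTb mulf_eq0 orbb.
by move/eqP.
Qed.

Lemma dotp_gt0 (x : pt) : x != 0 -> 0 < dotp x x.
Proof. by move=> nz; rewrite lt_neqAle eq_sym dotp_eq0 nz dotp_ge0. Qed.

Lemma dotp_symmx (A : 'M[R]_d) (x y : pt) : A^T = A ->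
  dotp (x *m A) y = dotp x (y *m A).
Proof.
move=> sA; rewrite /dotp trmx_mul sA -mulmxA //.
Qed.


Lemma quad_disc (a b c : R) : 0 <= a ->
  (forall t, 0 <= a * t ^+ 2 + 2 * b * t + c) -> b ^+ 2 <= a * c.
Proof.
move=> a0 H; have [az|anz] := eqVneq a 0.
  rewrite az in H *; have [->|bnz] := eqVneq b 0; first by rewrite expr0n /= mul0r.
  have := H (- (c + 1) / (2 * b)).
  have -> : 0 * (- (c + 1) / (2 * b)) ^+ 2 + 2 * b * (- (c + 1) / (2 * b)) + c = -1.
    by field.
  lra.
have ap : 0 < a by rewrite lt_neqAle eq_sym anz.
have := H (- b / a).
have -> : a * (- b / a) ^+ 2 + 2 * b * (- b / a) + c = c - b ^+ 2 / a.
  by field.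
rewrite subr_ge0 ler_pdivrMr // mulrC => h; exact: h.
Qed.

Lemma cs_form (B : 'M[R]_d) : B^T = B -> (forall v : pt, 0 <= dotp (v *m B) v) ->
  forall x y : pt, dotp (x *m B) y ^+ 2 <= dotp (x *m B) x * dotp (y *m B) y.
Proof.
move=> sB psd x y; rewrite mulrC; apply: quad_disc => // t.
have := psd (x + t *: y).
rewrite mulmxDl -scalemxAl !(dotpDl, dotpDr, dotpZl, dotpZr).
rewrite [dotp (y *m B) x]dotp_symmx // (dotpC y). 
by move=> h; apply: le_trans h _; rewrite le_eqVlt; apply/orP; left; apply/eqP; ring.
Qed.

Lemma cs (x y : pt) : dotp x y ^+ 2 <= dotp x x * dotp y y.
Proof.
have := @cs_form 1%:M (trmx1 _ _) _ x y; rewrite !mulmx1; apply.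
by move=> v; rewrite mulmx1 dotp_ge0.
Qed.

Lemma enorm_ge0 (x : pt) : 0 <= enorm x.
Proof. exact: sqrtr_ge0. Qed.

Lemma enorm_sqr (x : pt) : enorm x ^+ 2 = dotp x x.
Proof. by rewrite /enorm sqr_sqrtr // dotp_ge0. Qed.

Lemma cs_abs (x y : pt) : `|dotp x y| <= enorm x * enorm y.
Proof.
rewrite -(@ler_pXn2r _ 2) ?nnegrE ?mulr_ge0 ?enorm_ge0 //.
by rewrite exprMn !enorm_sqr real_normK ?num_real // cs.
Qed.

Lemma cs_le (x y : pt) : dotp x y <= enorm x * enorm y.
Proof. exact: le_trans (ler_norm _) (cs_abs x y). Qed.

Lemma enormD (x y : pt) : enorm (x + y) <= enorm x + enorm y.
Proof.
rewrite -(@ler_pXn2r _ 2) ?nnegrE ?addr_ge0 ?enorm_ge0 //.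
rewrite enorm_sqr dotpDl !dotpDr (dotpC y x) sqrrD !enorm_sqr.
have := cs_le x y; lra.
Qed.

Lemma enormZ a (x : pt) : enorm (a *: x) = `|a| * enorm x.
Proof.
by rewrite /enorm dotpZl dotpZr mulrA -expr2 sqrtrM ?sqr_ge0 // sqrtr_sqr.
Qed.

Lemma enormN (x : pt) : enorm (- x) = enorm x.
Proof. by rewrite -scaleN1r enormZ normrN1 mul1r. Qed.

Lemma enormB (x y : pt) : enorm (x - y) = enorm (y - x).
Proof. by rewrite -enormN opprB. Qed.

Lemma enorm0 : enorm (0 : pt) = 0.
Proof. by rewrite /enorm dotp0l sqrtr0. Qed.

Lemma enorm_gt0 (x : pt) : x != 0 -> 0 < enorm x.
Proof. by move=> nz; rewrite sqrtr_gt0 dotp_gt0. Qed.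

Lemma enorm_sum I (r : seq I) (P : pred I) (F : I -> pt) :
  enorm (\sum_(i <- r | P i) F i) <= \sum_(i <- r | P i) enorm (F i).
Proof.
elim/big_rec2: _ => [|i y1 y2 _ IH]; first by rewrite enorm0.
exact: le_trans (enormD _ _) (lerD (lexx _) IH).
Qed.


Definition KA (A : 'M[R]_d) : R := \sum_i \sum_j `|A i j|.

Lemma KA_ge0 A : 0 <= KA A.
Proof. by apply: sumr_ge0 => i _; apply: sumr_ge0 => j _. Qed.

Lemma coord_le (v : pt) i : v 0 i ^+ 2 <= dotp v v.
Proof.
rewrite dotpE (bigD1 i) //= -expr2 lerDl.
by apply: sumr_ge0 => k _; rewrite -expr2 sqr_ge0.
Qed.

Lemma quad_bound (A : 'M[R]_d) (v : pt) : `|dotp (v *m A) v| <= KA A * dotp v v.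
Proof.
have -> : dotp (v *m A) v = \sum_i \sum_j v 0 i * A i j * v 0 j.
  rewrite dotpE exchange_big /=; apply: eq_bigr => j _.
  by rewrite mxE mulr_suml; apply: eq_bigr => i _.
rewrite /KA mulr_suml; apply: le_trans (ler_norm_sum _ _ _) _.
apply: ler_sum => i _; rewrite mulr_suml.
apply: le_trans (ler_norm_sum _ _ _) _; apply: ler_sum => j _.
rewrite !normrM (mulrC `|v 0 i|) -mulrA ler_wpM2l //.
have hi := coord_le v i; have hj := coord_le v j.
have h2 : 2 * (`|v 0 i| * `|v 0 j|) <= v 0 i ^+ 2 + v 0 j ^+ 2.
  rewrite -(real_normK (num_real (v 0 i))) -(real_normK (num_real (v 0 j))).
  have := sqr_ge0 (`|v 0 i| - `|v 0 j|); rewrite sqrrB; lra.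
lra.
Qed.

Lemma dotp_mxmx (M : 'M[R]_d) (w : pt) :
  dotp (w *m M) (w *m M) = dotp (w *m (M *m M^T)) w.
Proof. by rewrite /dotp trmx_mul !mulmxA. Qed.

Definition RQ (A : 'M[R]_d) : set R :=
  [set r | exists2 v : pt, v != 0 & r = dotp (v *m A) v / dotp v v].

Definition mu (A : 'M[R]_d) : R := sup (RQ A).

Lemma RQ_has_sup A : (0 < d)%N -> has_sup (RQ A).
Proof.
move=> d0; split.
  have nz : (const_mx 1 : pt) != 0.
    apply/eqP => /rowP /(_ (Ordinal d0)); rewrite !mxE => /eqP; rewrite oner_eq0 //.
  set o : pt := const_mx 1.
  by exists (dotp (o *m A) o / dotp o o); exists o.
exists (KA A) => r [v vnz ->].
have p := dotp_gt0 vnz.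
rewrite ler_pdivrMr //; exact: le_trans (ler_norm _) (quad_bound _ _).
Qed.

Lemma rayleigh A (v : pt) : (0 < d)%N -> dotp (v *m A) v <= mu A * dotp v v.
Proof.
move=> d0; have [->|vnz] := eqVneq v 0; first by rewrite mul0mx !dotp0l mulr0.
have p := dotp_gt0 vnz.
rewrite -ler_pdivrMr //; apply: sup_upper_bound; first exact: RQ_has_sup.
by exists v.
Qed.

Lemma rayleigh_near A c : (0 < d)%N -> 0 < c ->
  exists2 v : pt, v != 0 & mu A * dotp v v - dotp (v *m A) v < c * dotp v v.
Proof.
move=> d0 c0; have [r [v vnz ->] h] := sup_adherent c0 (RQ_has_sup A d0).
exists v => //; have p := dotp_gt0 vnz.
move: h; rewrite /mu ltr_pdivlMr // mulrBl; lra.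
Qed.

Lemma mu_eigen (A : 'M[R]_d) : (0 < d)%N -> A^T = A -> eigenvalue A (mu A).
Proof.
move=> d0 sA; set B : 'M[R]_d := (mu A)%:M - A.
have sB : B^T = B by rewrite /B linearB /= sA tr_scalar_mx.
have qB : forall v : pt, dotp (v *m B) v = mu A * dotp v v - dotp (v *m A) v.
  by move=> v; rewrite /B mulmxBr dotpBl mul_mx_scalar dotpZl.
have psd : forall v : pt, 0 <= dotp (v *m B) v.
  by move=> v; rewrite qB subr_ge0 rayleigh.
apply/eigenvalueP.
have [/eqP K0|Knz] := eqVneq (kermx B) 0.
  exfalso.
  have : B \in unitmx by rewrite -row_free_unit -kermx_eq0 K0.
  move=> Bu; set Bi := invmx B.
  set K1 := KA (Bi *m Bi^T); set K2 := KA B.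
  have K1p : 0 <= K1 := KA_ge0 _. 
  have K2p : 0 <= K2 := KA_ge0 _.
  have c0 : 0 < (K1 * K2 + 1)^-1.
    by rewrite invr_gt0; have := mulr_ge0 K1p K2p; lra.
  have [v vnz] := rayleigh_near A d0 c0; rewrite -qB => hv.
  have p := dotp_gt0 vnz.
  set w := v *m B.
  have e1 : dotp v v <= K1 * dotp w w.
    have -> : v = w *m Bi by rewrite /w /Bi mulmxK.
    rewrite dotp_mxmx; exact: le_trans (ler_norm _) (quad_bound _ _).
  have e2 : dotp w w <= K2 * dotp (v *m B) v.
    have := cs_form sB psd v w.
    have -> : dotp (v *m B) w = dotp w w by [].
    have := quad_bound B w; rewrite -/K2 => hq.
    have hw := dotp_ge0 w; have hvB := psd v.
    have hq' : dotp (w *m B) w <= K2 * dotp w w := le_trans (ler_norm _) hq.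
    move=> h; have [w0|wp] := eqVneq (dotp w w) 0.
      by rewrite w0; nra.
    have wpos : 0 < dotp w w by rewrite lt_neqAle eq_sym wp hw.
    have : dotp w w ^+ 2 <= dotp (v *m B) v * (K2 * dotp w w).
      exact: le_trans h (ler_wpM2l hvB hq').
    rewrite expr2 mulrCA mulrA ler_pM2r //; lra.
  have h3 : (K1 * K2 + 1) * dotp (v *m B) v < dotp v v.
    by move: hv; rewrite mulrC ltr_pdivlMr ?ltr_pdivrMr; nra.
  have h4 : dotp v v <= K1 * K2 * dotp (v *m B) v.
    by apply: le_trans e1 _; rewrite -mulrA ler_wpM2l.
  by move: h3 h4; have := psd v; nra.
have [v /sub_kermxP vB vnz] := rowV0Pn Knz.
exists v => //; move: vB; rewrite /B mulmxBr mul_mx_scalar => /eqP.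
by rewrite subr_eq0 => /eqP <-.
Qed.

Lemma lambda_max_mu (A : 'M[R]_d) : (0 < d)%N -> A^T = A -> lambda_max A = mu A.
Proof.
move=> d0 sA; apply/eqP; rewrite eq_le; apply/andP; split.
  apply: ge_sup; first by exists (mu A); exact: mu_eigen.
  move=> a /eigenvalueP [v vA vnz]; have p := dotp_gt0 vnz.
  have := rayleigh A v d0; rewrite vA dotpZl ler_pM2r //.
apply: sup_upper_bound; last exact: mu_eigen.
split; first by exists (mu A); exact: mu_eigen.
exists (mu A) => a /eigenvalueP [v vA vnz]; have p := dotp_gt0 vnz.
have := rayleigh A v d0; rewrite vA dotpZl ler_pM2r //.
Qed.

End Basics.
Section Topo.
Variables (R : realType) (d : nat).
Local Notation pt := 'rV[R]_d.

Lemma seg_in (Om : set pt) (z w : pt) :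
  open Om -> Om z ->
  (forall t : R, 0 <= t <= 1 -> ~ bdry Om (z + t *: w)) ->
  Om (z + w).
Proof.
move=> oOm Omz nb.
set f := fun t : R => z + t *: w.
have cf : continuous f.
  move=> t; rewrite /f; apply: cvgD; first exact: cvg_cst.
  exact: scalel_continuous.
have cS : connected (f @` `[0, 1]).
  apply: connected_continuous_connected; first exact: segment_connected.
  exact: continuous_subspaceT.
have key : f @` `[0, 1] `&` Om = f @` `[0, 1].
  apply: cS.
  - exists z; split => //; exists 0; rewrite /f ?scale0r ?addr0 //.
    by rewrite set_itvE /= lexx ler01.
  - by exists Om.
  - exists (closure Om); first exact: closed_closure.
    apply/seteqP; split => x [Sx Ox]; split => //; first exact: subset_closure.
    apply: contrapT => nOx; case: Sx => t t01 ftx.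
    apply: (nb t); first by move: t01; rewrite set_itvE /= => /andP[-> ->].
    rewrite -/(f t) ftx; split => //.
    by rewrite (interior_id Om).1.
have : (f @` `[0, 1]) (f 1).
  by exists 1 => //; rewrite set_itvE /= lexx ler01.
by rewrite -key => -[_]; rewrite /f scale1r.
Qed.


Lemma edist_le (Om : set pt) (z y : pt) : bdry Om y -> edist_set z (bdry Om) <= enorm (z - y).
Proof.
move=> By; apply: ge_inf; last by exists y.
by exists 0 => _ [y' _ ->]; exact: enorm_ge0.
Qed.

Lemma bdry_far (Om : set pt) (z : pt) r : r < edist_set z (bdry Om) ->
  forall y, bdry Om y -> r < enorm (z - y).
Proof. by move=> hr y By; apply: (lt_le_trans hr); exact: edist_le. Qed.

Lemma inner_shift (Om : set pt) (z v : pt) eps h :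
  open Om -> 0 < eps -> h <= eps -> enorm v = 1 ->
  inner_set Om (2 * eps) z -> inner_set Om h (z + eps *: v).
Proof.
move=> oOm e0 he nv [Omz hz]; split.
  apply: seg_in => // t /andP[t0 t1] By.
  have := bdry_far hz By.
  rewrite opprD addrA subrr sub0r enormN scalerA enormZ nv mulr1.
  rewrite ger0_norm ?mulr_ge0 ?(ltW e0) //; nra.
have [[y By]|nB] := pselect (exists y, bdry Om y).
  apply: (le_lt_trans he); apply: (@lt_le_trans _ _ (edist_set z (bdry Om) - eps)).
    lra.
  apply: lb_le_inf; first by exists (enorm (z + eps *: v - y)), y.
  move=> _ [y' By' ->].
  have := bdry_far hz By'.
  have := enormD (z + eps *: v - y') (- (eps *: v)).
  rewrite enormN enormZ nv mulr1 ger0_norm ?(ltW e0) //.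
  have -> : z + eps *: v - y' + - (eps *: v) = z - y' by rewrite addrAC addrK.
  have := edist_le z By'; lra.
have Ee : forall x : pt, [set r | exists2 y, bdry Om y & r = enorm (x - y)] = set0.
  by move=> x; apply/seteqP; split => // r [y By]; exfalso; apply: nB; exists y.
rewrite /edist_set Ee; move: hz; rewrite /edist_set Ee; lra.
Qed.

End Topo.

Section Interp.
Variables (R : realType) (d : nat).
Local Notation pt := 'rV[R]_d.

Lemma dotp_sumr I (r : seq I) (P : pred I) (F : I -> pt) w :
  dotp w (\sum_(i <- r | P i) F i) = \sum_(i <- r | P i) dotp w (F i).
Proof.
rewrite dotpC dotp_suml; apply: eq_bigr => i _; exact: dotpC.
Qed.

Lemma quadD (A : 'M[R]_d) b c (x y : pt) : A^T = A ->
  quad A b c (x + y) = quad A b c x + dotp (x *m A + b) y + 2^-1 * dotp (y *m A) y.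
Proof.
move=> sA; rewrite /quad mulmxDl !(dotpDl, dotpDr).
rewrite [dotp (y *m A) x]dotp_symmx // [dotp y _]dotpC; by field.
Qed.

Lemma interp_formula (A : 'M[R]_d) b c n (l : 'I_n -> R) (p : 'I_n -> pt) x :
  A^T = A -> \sum_i l i = 1 -> x = \sum_i l i *: p i ->
  \sum_i l i * quad A b c (p i) - quad A b c x =
  2^-1 * \sum_i l i * dotp ((p i - x) *m A) (p i - x).
Proof.
move=> sA l1 xe.
have e : forall i, quad A b c (p i) = quad A b c x + dotp (x *m A + b) (p i - x)
   + 2^-1 * dotp ((p i - x) *m A) (p i - x).
  by move=> i; rewrite -quadD // addrC subrK.
set Q := quad A b c x; set g := x *m A + b.
rewrite (eq_bigr (fun i => Q * l i + l i * dotp g (p i - x) +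
   2^-1 * (l i * dotp ((p i - x) *m A) (p i - x)))); last first.
  by move=> i _; rewrite e; rewrite -/Q -/g; ring.
rewrite !big_split /= -!mulr_sumr l1 mulr1.
have -> : \sum_i l i * dotp g (p i - x) = 0.
  have z0 : \sum_i l i *: (p i - x) = 0.
    rewrite (eq_bigr (fun i => l i *: p i - l i *: x)); last by move=> i _; rewrite scalerBr.
    by rewrite sumrB -scaler_suml l1 scale1r -xe subrr.
  rewrite -[RHS](dotp0r g) -z0 dotp_sumr; apply: eq_bigr => i _; by rewrite dotpZr.
by rewrite addr0 addrAC subrr add0r.
Qed.

Lemma interp_bound (A : 'M[R]_d) b c n (l : 'I_n -> R) (p : 'I_n -> pt) x H :
  A^T = A -> (forall i, 0 <= l i) -> \sum_i l i = 1 -> x = \sum_i l i *: p i ->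
  (forall i, dotp (p i - x) (p i - x) <= H) ->
  `|\sum_i l i * quad A b c (p i) - quad A b c x| <= 2^-1 * KA A * H.
Proof.
move=> sA l0 l1 xe hH; rewrite (interp_formula b c sA l1 xe) normrM.
rewrite ger0_norm ?invr_ge0 ?ler0n // -mulrA ler_wpM2l ?invr_ge0 ?ler0n //.
apply: le_trans (ler_norm_sum _ _ _) _.
apply: (@le_trans _ _ (\sum_i l i * (KA A * H))).
  apply: ler_sum => i _; rewrite normrM ger0_norm // ler_wpM2l //.
  apply: le_trans (quad_bound _ _) _; rewrite ler_wpM2l ?KA_ge0 //.
by rewrite -mulr_suml l1 mul1r.
Qed.

Lemma conv_dist n (l : 'I_n -> R) (p : 'I_n -> pt) y :
  (forall i, 0 <= l i) -> \sum_i l i = 1 ->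
  enorm (\sum_i l i *: p i - y) <= \sum_i l i * enorm (p i - y).
Proof.
move=> l0 l1.
have -> : \sum_i l i *: p i - y = \sum_i l i *: (p i - y).
  rewrite [RHS](eq_bigr (fun i => l i *: p i - l i *: y)); last by move=> i _; rewrite scalerBr.
  by rewrite sumrB -scaler_suml l1 scale1r.
apply: le_trans (enorm_sum _ _ _) _; apply: ler_sum => i _.
by rewrite enormZ ger0_norm.
Qed.

Lemma conv_le n (l : 'I_n -> R) (F : 'I_n -> R) B :
  (forall i, 0 <= l i) -> \sum_i l i = 1 -> (forall i, F i <= B) ->
  \sum_i l i * F i <= B.
Proof.
move=> l0 l1 hF; apply: (@le_trans _ _ (\sum_i l i * B)).
  by apply: ler_sum => i _; rewrite ler_wpM2l.
by rewrite -mulr_suml l1 mul1r.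
Qed.

Lemma le_sum_term (I : finType) (F : I -> R) i0 : (forall i, 0 <= F i) ->
  F i0 <= \sum_i F i.
Proof.
move=> F0; rewrite (bigD1 i0) //= lerDl; exact: sumr_ge0.
Qed.

Definition Bd (v : 'I_d.+1 -> pt) : R := \sum_i \sum_k enorm (v i - v k).

Lemma chull_diam (v : 'I_d.+1 -> pt) x y :
  chull (range v) x -> chull (range v) y -> enorm (x - y) <= Bd v.
Proof.
move=> [n [p [l [pr l0 l1 ->]]]] [n' [p' [l' [pr' l0' l1' ->]]]].
apply: le_trans (conv_dist _ _ l0 l1) _; apply: conv_le => // a.
rewrite enormB; apply: le_trans (conv_dist _ _ l0' l1') _; apply: conv_le => // b.
case: (pr a) => i _ <-; case: (pr' b) => k _ <-.
apply: (@le_trans _ _ (\sum_k' enorm (v k - v k'))).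
  by apply: le_sum_term => k'; exact: enorm_ge0.
rewrite /Bd; apply: (@le_sum_term _ (fun i' => \sum_k' enorm (v i' - v k')) k) => i'.
by apply: sumr_ge0 => k' _; exact: enorm_ge0.
Qed.

Lemma vertex_in (v : 'I_d.+1 -> pt) i : chull (range v) (v i).
Proof.
exists d.+1, v, (fun k => (k == i)%:R); split.
- by move=> k; exists k.
- by move=> k; rewrite ler0n.
- by rewrite (bigD1 i) //= eqxx big1 ?addr0 // => k /negbTE ->.
- by rewrite (bigD1 i) //= eqxx scale1r big1 ?addr0 // => k /negbTE ->; rewrite scale0r.
Qed.

Lemma diam_ub (v : 'I_d.+1 -> pt) x y :
  chull (range v) x -> chull (range v) y -> enorm (x - y) <= diam_set (simplex v).
Proof.
move=> hx hy; apply: sup_upper_bound; last by exists x, y.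
split; first by exists (enorm (v ord0 - v ord0)), (v ord0), (v ord0); split => //; exact: vertex_in.
by exists (Bd v) => _ [x' [y' [hx' hy' ->]]]; exact: chull_diam.
Qed.

Lemma le_bigmax_seq (I : eqType) (r : seq I) (F : I -> R) i0 x :
  x \in r -> F x <= \big[Num.max/i0]_(y <- r) F y.
Proof.
elim: r => // a r IH; rewrite in_cons big_cons => /orP [/eqP->|xr].
  by rewrite le_max lexx.
by rewrite le_max IH ?orbT.
Qed.

Lemma ge_bigmin_seq (I : eqType) (r : seq I) (F : I -> R) i0 x :
  x \in r -> \big[Num.min/i0]_(y <- r) F y <= F x.
Proof.
elim: r => // a r IH; rewrite in_cons big_cons => /orP [/eqP->|xr].
  by rewrite ge_min lexx.
by rewrite ge_min IH ?orbT.
Qed.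

Lemma bigmax_attained (I : eqType) (r : seq I) (F : I -> R) x0 :
  x0 \in r -> exists2 x, x \in r & \big[Num.max/F x0]_(y <- r) F y = F x.
Proof.
move=> x0r; rewrite big_seq.
apply: (big_ind (fun t => exists2 x, x \in r & t = F x)).
- by exists x0.
- move=> t1 t2 [x1 r1 ->] [x2 r2 ->]; rewrite /Num.max.
  by case: ifP => _; [exists x2|exists x1].
- by move=> x xr; exists x.
Qed.

Lemma diam_le_mesh m (M : 'I_m -> 'I_d.+1 -> pt) j :
  diam_set (simplex (M j)) <= meshsize M.
Proof. exact: (le_bigmax_seq _ _ (mem_index_enum j)). Qed.

Lemma bary (v : 'I_d.+1 -> pt) x : chull (range v) x ->
  exists l : 'I_d.+1 -> R, [/\ (forall i, 0 <= l i), \sum_i l i = 1 & x = \sum_i l i *: v i].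
Proof.
move=> [n [p [l [pr l0 l1 ->]]]].
have [f hf] : exists f : 'I_n -> 'I_d.+1, forall a, v (f a) = p a.
  have [f hf] := @choice _ _ (fun a i => v i = p a) (fun a => let: ex_intro2 i _ e := pr a in ex_intro _ i e).
  by exists f.
exists (fun i => \sum_(a | f a == i) l a); split.
- by move=> i; apply: sumr_ge0.
- by rewrite -l1 (partition_big f predT) //.
rewrite (partition_big f predT) //=; apply: eq_bigr => i _.
rewrite scaler_suml; apply: eq_bigr => a /eqP <-; by rewrite hf.
Qed.

End Interp.

Section Core.
Variables (R : realType) (d : nat).
Local Notation pt := 'rV[R]_d.

Lemma unit_of_neg (A : 'M[R]_d) : (0 < d)%N -> mu A < 0 -> A \in unitmx.
Proof.
move=> d0 mneg; rewrite -row_free_unit -kermx_eq0; apply: contraT => Knz.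
have [v /sub_kermxP vA vnz] := rowV0Pn Knz.
have := rayleigh A v d0; rewrite vA dotp0l => h.
have p := dotp_gt0 vnz; have : mu A * dotp v v < 0 by rewrite pmulr_llt0.
by rewrite ltNge h.
Qed.

Lemma hard_case (A : 'M[R]_d) b c (z : pt) eps theta (S : seq pt) :
  (0 < d)%N -> A^T = A -> 0 < eps -> 0 < theta -> theta <= 1 ->
  theta_net theta S -> mu A < 0 ->
  ~ (exists x, eball z eps x /\ strict_loc_max (quad A b c) x) ->
  exists2 w, w \in S &
    quad A b c (z + eps *: w) <= quad A b c z + mu A * eps ^+ 2
       + `|mu A| * theta ^+ 2 * eps ^+ 2.
Proof.
move=> d0 sA e0 t0 t1 [Sn Ssym Snet] mneg nmax.
have Au := unit_of_neg d0 mneg.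
set xs : pt := - (b *m invmx A).
have xsA : xs *m A + b = 0.
  by rewrite /xs mulNmx -mulmxA mulVmx // mulmx1 addNr.
have phixs : forall y, quad A b c y = quad A b c xs + 2^-1 * dotp ((y - xs) *m A) (y - xs).
  move=> y; rewrite -{1}(subrK xs y) addrC quadD // xsA dotp0l addr0 //.
have far : eps <= enorm (xs - z).
  rewrite leNgt; apply/negP => hlt; apply: nmax; exists xs; split => //.
  exists 1 => // y /andP [yp _]; rewrite phixs gtrDl.
  have ynz : y - xs != 0 by apply: contraTneq yp => ->; rewrite enorm0 ltxx.
  have := rayleigh A (y - xs) d0; have := dotp_gt0 ynz.
  have : 0 < 2^-1 :> R by rewrite invr_gt0 ltr0n.
  move=> h2 hp hr; rewrite pmulr_rlt0 //; apply: le_lt_trans hr _.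
  by rewrite pmulr_llt0.
set u := xs - z; set g := z *m A + b.
have gE : g = - (u *m A).
  have hb : b = - (xs *m A) by apply/eqP; rewrite -subr_eq0 opprK addrC xsA.
  by rewrite /g /u mulmxBl opprB hb.
have un : 0 < enorm u := lt_le_trans e0 far.
have gu : - mu A * dotp u u <= dotp g u.
  by rewrite gE dotpNl mulNr lerN2 rayleigh.
have gbig : - mu A * eps <= enorm g.
  have cs1 := cs_le g u; rewrite -enorm_sqr in gu.
  have : - mu A * enorm u <= enorm g.
    rewrite -(ler_pM2r un); apply: le_trans cs1; apply: le_trans gu; rewrite expr2 mulrA //.
  apply: le_trans; rewrite ler_pM2l //; lra.
have gp : 0 < enorm g by apply: lt_le_trans gbig; rewrite mulr_gt0 // oppr_gt0.
set v : pt := - ((enorm g)^-1 *: g).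
have vn : enorm v = 1.
  by rewrite /v enormN enormZ ger0_norm ?invr_ge0 ?(ltW gp) // mulVf ?gt_eqF.
have [vt vtS hvt] := Snet v vn.
exists vt => //; have vtn := Sn vt vtS.
have gv : g = - enorm g *: v by rewrite /v scalerN scaleNr opprK scalerA mulfV ?gt_eqF // scale1r.
have dvt : dotp v vt = 1 - enorm (v - vt) ^+ 2 / 2.
  rewrite enorm_sqr dotpBl !dotpBr -!enorm_sqr vn vtn (dotpC vt v) expr1n; by field.
have hq := rayleigh A vt d0; rewrite -enorm_sqr vtn expr1n mulr1 in hq.
rewrite quadD // -/g dotpZr -scalemxAl dotpZl dotpZr gv dotpZl dvt.
set G := enorm g; set E := enorm (v - vt); set q := dotp (vt *m A) vt.
have E0 : 0 <= E := enorm_ge0 _.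
have E2 : E ^+ 2 <= theta ^+ 2 by rewrite ler_pXn2r ?nnegrE ?(ltW t0).
have am : `|mu A| = - mu A by rewrite ltr0_norm.
rewrite am.
have h1 : 0 <= 1 - E ^+ 2 / 2.
  have : theta ^+ 2 <= 1 by rewrite expr_le1 ?(ltW t0).
  lra.
set m := mu A; set F := 1 - E ^+ 2 / 2.
have k1 : (- m * eps) * F <= G * F := ler_wpM2r h1 gbig.
have k1' : eps * ((- m * eps) * F) <= eps * (G * F) := ler_wpM2l (ltW e0) k1.
have k2 : eps * (eps * q) <= eps * (eps * m).
  by rewrite ler_wpM2l ?(ltW e0) // ler_wpM2l ?(ltW e0).
have mp : 0 <= - m * (eps * eps) by rewrite mulr_ge0 ?mulr_ge0 ?(ltW e0) // oppr_ge0 ltW.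
have k3 : (- m * (eps * eps)) * E ^+ 2 <= (- m * (eps * eps)) * theta ^+ 2 := ler_wpM2l mp E2.
have k4 : 0 <= - m * (eps * eps) * theta ^+ 2 by rewrite mulr_ge0 ?sqr_ge0.
rewrite /F in k1' *; rewrite !expr2 in k3 k4 *.
lra.
Qed.


Lemma core (A : 'M[R]_d) b c (z : pt) eps theta (S : seq pt) :
  (0 < d)%N -> A^T = A -> 0 < eps -> 0 < theta -> theta <= 1 ->
  theta_net theta S ->
  ~ (exists x, eball z eps x /\ strict_loc_max (quad A b c) x) ->
  forall x1, x1 \in stencil eps S z -> exists2 x2, x2 \in stencil eps S z &
    quad A b c x1 + quad A b c x2 <= 2 * quad A b c z + mu A * eps ^+ 2
       + `|mu A| * theta ^+ 2 * eps ^+ 2.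
Proof.
move=> d0 sA e0 t0 t1 net nmax x1.
have [Sn Ssym _] := net.
have k0 : 0 <= `|mu A| * theta ^+ 2 * eps ^+ 2.
  by apply: mulr_ge0; [apply: mulr_ge0 | ]; rewrite ?normr_ge0 ?exprn_ge0 // ltW.
rewrite in_cons => /orP [/eqP -> | /mapP [w wS ->]].
  have [mneg|mpos] := ltP (mu A) 0.
    have [w wS hw] := @hard_case A b c z eps theta S d0 sA e0 t0 t1 net mneg nmax.
    exists (z + eps *: w); first by rewrite in_cons; apply/orP; right; apply/mapP; exists w.
    lra.
  exists z; first by rewrite in_cons eqxx.
  have : 0 <= mu A * eps ^+ 2 by rewrite mulr_ge0 ?sqr_ge0.
  lra.
exists (z + eps *: - w).
  by rewrite in_cons; apply/orP; right; apply/mapP; exists (- w) => //; exact: Ssym.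
rewrite !quadD // scalerN mulNmx dotpNl !dotpNr opprK -!scalemxAl !dotpZl !dotpZr.
have hq := rayleigh A w d0; rewrite -enorm_sqr (Sn w wS) expr1n mulr1 in hq.
have : eps * (eps * dotp (w *m A) w) <= eps * (eps * mu A).
  by rewrite ler_wpM2l ?(ltW e0) // ler_wpM2l ?(ltW e0).
rewrite !expr2 in k0 *; lra.
Qed.

End Core.

Section Final.
Variables (R : realType) (d : nat).
Local Notation pt := 'rV[R]_d.

Lemma sum_delta (i : 'I_d.+1) : \sum_k ((k == i)%:R : R) = 1.
Proof. by rewrite (bigD1 i) //= eqxx big1 ?addr0 // => k /negbTE ->. Qed.

Lemma sum_deltaZ (v : 'I_d.+1 -> pt) (i : 'I_d.+1) :
  \sum_k ((k == i)%:R : R) *: v k = v i.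
Proof. by rewrite (bigD1 i) //= eqxx scale1r big1 ?addr0 // => k /negbTE ->; rewrite scale0r. Qed.

Lemma mesh_pos m (M : 'I_m -> 'I_d.+1 -> pt) (j : 'I_m) : (0 < d)%N -> is_mesh M ->
  0 < meshsize M.
Proof.
move=> d0 [indep _]; set v := M j.
have nq : (ord0 : 'I_d.+1) != ord_max.
  by apply/eqP => /(congr1 val) /= e; move: d0; rewrite -e.
have neq : v ord0 - v ord_max != 0.
  apply/eqP => e.
  have s0 : \sum_(k < d.+1) ((k == ord0)%:R - (k == ord_max)%:R : R) = 0.
    by rewrite sumrB !sum_delta subrr.
  have s1 : \sum_(k < d.+1) ((k == ord0)%:R - (k == ord_max)%:R : R) *: v k = 0.
    rewrite (eq_bigr (fun k => (k == ord0)%:R *: v k - (k == ord_max)%:R *: v k)).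
      by rewrite sumrB !sum_deltaZ e.
    by move=> k _; rewrite scalerBl.
  have := indep j _ s0 s1 ord0.
  rewrite eqxx (negbTE nq) subr0 => /eqP; rewrite oner_eq0 //.
apply: lt_le_trans (diam_le_mesh M j).
apply: lt_le_trans (diam_ub (vertex_in v ord0) (vertex_in v ord_max)).
exact: enorm_gt0.
Qed.

Lemma interp_err m (M : 'I_m -> 'I_d.+1 -> pt) (A : 'M[R]_d) b c x : A^T = A ->
  (exists j (l : 'I_d.+1 -> R), [/\ (forall i, 0 <= l i), \sum_i l i = 1 & x = \sum_i l i *: M j i]) ->
  `|interp M (quad A b c) x - quad A b c x| <= 2^-1 * KA A * meshsize M ^+ 2.
Proof.
move=> sA [j [l [l0 l1 xe]]]; rewrite /interp.
set P := [set y | _].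
have : P (xget 0 P).
  apply: xgetPex; exists (\sum_i l i * quad A b c (M j i)); exists j, l; split => //.
move=> [j' [l' [l0' l1' xe' ->]]].
apply: (interp_bound b c sA l0' l1' xe') => i.
have hx : chull (range (M j')) x by exists d.+1, (M j'), l'; split => // k; exists k.
have := le_trans (diam_ub (vertex_in (M j') i) hx) (diam_le_mesh M j').
rewrite -enorm_sqr => hh; have h00 := enorm_ge0 (M j' i - x).
rewrite !expr2; exact: ler_pM.
Qed.

End Final.

Unset Implicit Arguments.
Set Strict Implicit.

Theorem lemma3p7 (R : realType) (d : nat) :
  (0 < d)%N ->
  forall A : 'M[R]_d, A^T = A ->
  forall sigma : R, 0 < sigma ->
  exists C : R,
  forall (Om : set 'rV[R]_d) (m : nat) (M : 'I_m -> 'I_d.+1 -> 'rV[R]_d)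
         (h eps theta : R) (S : seq 'rV[R]_d) (z b : 'rV[R]_d) (c : R),
    bounded_domain_cont_bdry Om ->
    is_mesh M -> shape_regular sigma M -> h = meshsize M ->
    inner_set Om h `<=` mesh_domain M -> mesh_domain M `<=` Om ->
    h <= eps -> eps <= diam_set Om ->
    0 < theta -> theta <= 1 -> theta_net theta S ->
    nodes M z -> inner_set Om (2 * eps) z ->
    ~ (exists x, eball z eps x /\ strict_loc_max (quad A b c) x) ->
    - lambda_max A - C * (h ^+ 2 / eps ^+ 2 + theta ^+ 2)
      <= neg_disc_inf_lap M eps S (quad A b c) z.
Proof.
move=> d0 A sA sigma _.
exists (`|mu A| + 2 * KA A).
move=> Om m M h eps theta S z b c [oOm _ _ _ _] mesh _ hE inner_sub _ he _ t0 t1 net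
  [j0 [i0 zE]] zin nmax.
rewrite (lambda_max_mu d0 sA).
have hp : 0 < h by rewrite hE; exact: (mesh_pos j0 d0 mesh).
have e0 : 0 < eps := lt_le_trans hp he.
have [Sn _ _] := net.
set st := stencil eps S z.
have rep : forall x, x \in st -> exists j (l : 'I_d.+1 -> R),
    [/\ (forall i, 0 <= l i), \sum_i l i = 1 & x = \sum_i l i *: M j i].
  move=> x; rewrite in_cons => /orP [/eqP -> | /mapP [v vS ->]].
    have [l hl] := bary (vertex_in (M j0) i0); rewrite -zE; by exists j0, l.
  have := inner_shift oOm e0 he (Sn v vS) zin => /inner_sub /interior_subset [j _ hj].
  have [l hl] := bary hj; by exists j, l.
set E := 2^-1 * KA A * h ^+ 2.
have err : forall x, x \in st -> `|interp M (quad A b c) x - quad A b c x| <= E.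
  by move=> x /rep; rewrite /E hE; exact: interp_err.
have zst : z \in st by rewrite in_cons eqxx.
rewrite /neg_disc_inf_lap -/st.
set I := interp M (quad A b c).
have [x1 x1st ->] := bigmax_attained I zst.
have [x2 x2st hx] := @core R d A b c z eps theta S d0 sA e0 t0 t1 net nmax x1 x1st.
have mn := ge_bigmin_seq I (I z) x2st.
have := err _ x1st; have := err _ x2st; have := err _ zst.
rewrite -/I !ler_norml => /andP [ez1 ez2] /andP [e21 e22] /andP [e11 e12].
set Mn := \big[Num.min/I z]_(x <- st) I x in mn *.
set X := 2 * quad A b c z - I x1 - Mn.
have hX : - mu A * eps ^+ 2 - `|mu A| * theta ^+ 2 * eps ^+ 2 - 2 * KA A * h ^+ 2 <= X.
  rewrite /X; move: hx; rewrite /E in ez1 ez2 e21 e22 e11 e12.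
  have -> : 2 * KA A * h ^+ 2 = 4 * (2^-1 * KA A * h ^+ 2) by field.
  have : 0 <= 2^-1 * KA A * h ^+ 2.
    by apply: mulr_ge0; [apply: mulr_ge0; [rewrite invr_ge0 ler0n | exact: KA_ge0] | exact: sqr_ge0].
  lra.
have ep2 : 0 < eps ^+ 2 by rewrite exprn_gt0.
have en : eps != 0 by rewrite gt_eqF.
have -> : - mu A - (`|mu A| + 2 * KA A) * (h ^+ 2 / eps ^+ 2 + theta ^+ 2) =
   (eps ^+ 2)^-1 * (- mu A * eps ^+ 2 - (`|mu A| + 2 * KA A) * h ^+ 2
     - (`|mu A| + 2 * KA A) * (theta ^+ 2 * eps ^+ 2)).
  by field.
rewrite ler_wpM2l ?invr_ge0 ?(ltW ep2) //.
move: hX; rewrite -[`|mu A| * theta ^+ 2 * eps ^+ 2]mulrA => hX.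
apply: le_trans hX.
have KA0 := KA_ge0 A; have mu0 := normr_ge0 (mu A).
have t2 : 0 <= theta ^+ 2 * eps ^+ 2 by rewrite mulr_ge0 ?sqr_ge0.
have h2 : 0 <= h ^+ 2 by rewrite sqr_ge0.
have a1 : 2 * KA A * h ^+ 2 <= (`|mu A| + 2 * KA A) * h ^+ 2.
  by rewrite ler_wpM2r // lerDr.
have a2 : `|mu A| * (theta ^+ 2 * eps ^+ 2) <= (`|mu A| + 2 * KA A) * (theta ^+ 2 * eps ^+ 2).
  by rewrite ler_wpM2r // lerDl mulr_ge0.
lra.
Qed.
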